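(* Let $A\in\{0,1\}$, $\varepsilon>0$, $c>\varepsilon$, and let $(R,W)$ be a solution of system (ODE) on $[\varepsilon,c)$ (with $R\in C^1$, $W\in C^2$) satisfying $$W(\varepsilon)<-1,\quad W'(\varepsilon)<0,\quad W''(\varepsilon)<0,\quad R(\varepsilon)>0.$$ Suppose $W(y)<-\frac13$ for all $y\in(\varepsilon,c)$ and $-2W(y)-R(y)>0$ for all $y\in(\varepsilon,c)$. Then $H(y):=W'(y)y+3W(y)+1<0$ for all $y\in(\varepsilon,c)$.
   Context: System (ODE) for $R(y),W(y)$, with $A\in\{0,1\}$: $R'(y)W(y)y=-R(y)\big(W'(y)y+3W(y)+1\big)$, $W''(y)W(y)y^2=\tfrac12(W(y)y)^2\big(W'(y)y+W(y)+1-R(y)\big)+(W'(y)y+1)^2+4W(y)+3W(y)^2-\tfrac A2\big(W'(y)y+3W(y)+1\big)$. *)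

(* Defs.v *)
From Stdlib Require Import Reals.
From Coquelicot Require Import Coquelicot.
Open Scope R_scope.

(* One-sided-aware derivative on an interval: f has derivative l at y
   relative to the domain D (here D = [eps, c)), i.e. the limit of
   difference quotients is taken only along points of D. At interior
   points this coincides with the usual derivative; at the left
   endpoint eps it is the right derivative. *)
Definition is_derive_on (D : R -> Prop) (f : R -> R) (y l : R) : Prop :=
  filterdiff f (within D (locally y)) (fun h => scal h l).

Definition continuous_on_at (D : R -> Prop) (f : R -> R) (y : R) : Prop :=
  filterlim f (within D (locally y)) (locally (f y)).

(* Main.v *)
Require Import Defs.
From Stdlib Require Import Reals Lra Psatz Classical.
From Coquelicot Require Import Coquelicot.
Open Scope R_scope.

Section S.
Variables (D : R -> Prop).

Lemma lim_within (y : R) : is_filter_lim (within D (locally y)) y.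
Proof. intros P HP. unfold within. revert HP; apply filter_imp. auto. Qed.

Lemma cont_of_diff f y l : is_derive_on D f y l ->
  filterlim f (within D (locally y)) (locally (f y)).
Proof.
  intro H. apply (@filterdiff_continuous_aux R_AbsRing R_NormedModule R_NormedModule (within D (locally y)) (within_filter _ _ _ (@filter_filter _ _ (locally_filter y))) f).
  exists (fun h => scal h l). exact H. apply lim_within.
Qed.

Lemma diff_interior f y l : locally y D -> is_derive_on D f y l -> is_derive f y l.
Proof.
  intros HD [Hl Hd]. split; [exact Hl|].
  intros x Hx eps0.
  assert (Hx' : is_filter_lim (within D (locally y)) x).
  { intros P HP. apply Hx in HP. unfold within. revert HP; apply filter_imp. auto. }
  specialize (Hd x Hx' eps0). unfold within in Hd.
  generalize (filter_and _ _ HD Hd). apply filter_imp. intros z [a b]. auto.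
Qed.
End S.

Lemma cont_H (D : R -> Prop) (W W1 : R -> R) y :
  filterlim W (within D (locally y)) (locally (W y)) ->
  filterlim W1 (within D (locally y)) (locally (W1 y)) ->
  filterlim (fun x => W1 x * x + 3 * W x + 1) (within D (locally y))
     (locally (W1 y * y + 3 * W y + 1)).
Proof.
  intros HW HW1.
  assert (FF : Filter (within D (locally y))).
  { apply within_filter. apply filter_filter. }
  assert (Hid : filterlim (fun x => x) (within D (locally y)) (locally y)).
  { intros P HP. apply lim_within. exact HP. }
  apply (filterlim_comp_2 (fun x => W1 x * x + 3 * W x) (fun _ => 1) Rplus (G:=locally (W1 y * y + 3 * W y)) (H:=locally 1)).
  2: apply filterlim_const.
  2: apply (@filterlim_plus R_AbsRing R_NormedModule).
  apply (filterlim_comp_2 (fun x => W1 x * x) (fun x => 3 * W x) Rplus (G:=locally (W1 y * y)) (H:=locally (3 * W y))).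
  3: apply (@filterlim_plus R_AbsRing R_NormedModule).
  - apply (filterlim_comp_2 W1 (fun x => x) Rmult (G:=locally (W1 y)) (H:=locally y)); auto.
    apply (@filterlim_mult R_AbsRing).
  - apply (filterlim_comp_2 (fun _ => 3) W Rmult (G:=locally 3) (H:=locally (W y))); auto.
    apply filterlim_const.
    apply (@filterlim_mult R_AbsRing).
Qed.

Lemma eps_delta (D : R -> Prop) (g : R -> R) y :
  filterlim g (within D (locally y)) (locally (g y)) ->
  forall e, 0 < e -> exists d, 0 < d /\ forall x, D x -> Rabs (x - y) < d -> Rabs (g x - g y) < e.
Proof.
  intros H e He.
  assert (Hb : locally (g y) (ball (g y) (mkposreal e He))) by apply locally_ball.
  specialize (H _ Hb). destruct H as [d Hd].
  exists d. split. apply cond_pos. intros x Dx Hx. apply (Hd x). exact Hx. exact Dx.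
Qed.

Lemma der_H (W W1 : R -> R) s a b :
  is_derive W s a -> is_derive W1 s b ->
  is_derive (fun x => W1 x * x + 3 * W x + 1) s (b * s + W1 s + 3 * a).
Proof.
  intros Ha Hb.
  replace (b * s + W1 s + 3 * a) with
    (plus (plus (plus (mult b s) (mult (W1 s) one)) (scal 3 a)) zero).
  2: { unfold plus, mult, scal, zero, one; simpl. unfold mult; simpl. ring. }
  apply (@is_derive_plus R_AbsRing R_NormedModule (fun x => W1 x * x + 3 * W x) (fun _ => 1)).
  apply (@is_derive_plus R_AbsRing R_NormedModule (fun x => W1 x * x) (fun x => 3 * W x)).
  apply (is_derive_mult W1 (fun x => x)). exact Hb. exact (@is_derive_id R_AbsRing s).
  intros; apply Rmult_comm.
  apply (is_derive_scal W). exact Ha.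
  exact (@is_derive_const R_AbsRing R_NormedModule 1 s).
Qed.

Theorem mainTheorem8 (A : R) (eps c : R) (Rf R1 W W1 W2 : R -> R) :
  (A = 0 \/ A = 1) ->
  0 < eps -> eps < c ->
  (forall y, eps <= y < c ->
     is_derive_on (fun x => eps <= x < c) Rf y (R1 y) /\
     is_derive_on (fun x => eps <= x < c) W y (W1 y) /\
     is_derive_on (fun x => eps <= x < c) W1 y (W2 y) /\
     continuous_on_at (fun x => eps <= x < c) R1 y /\ continuous_on_at (fun x => eps <= x < c) W2 y) ->
  (forall y, eps <= y < c ->
     R1 y * W y * y = - Rf y * (W1 y * y + 3 * W y + 1) /\
     W2 y * W y * y ^ 2 =
       / 2 * (W y * y) ^ 2 * (W1 y * y + W y + 1 - Rf y)
       + (W1 y * y + 1) ^ 2 + 4 * W y + 3 * W y ^ 2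
       - A / 2 * (W1 y * y + 3 * W y + 1)) ->
  W eps < -1 -> W1 eps < 0 -> W2 eps < 0 -> Rf eps > 0 ->
  (forall y, eps < y < c -> W y < - / 3) ->
  (forall y, eps < y < c -> -2 * W y - Rf y > 0) ->
  forall y, eps < y < c -> W1 y * y + 3 * W y + 1 < 0.
Proof.
  intros HA Heps Hc Hder Hode HWe HW1e _ _ HW HR y Hy.
  set (D := fun x => eps <= x < c).
  set (H := fun x => W1 x * x + 3 * W x + 1).
  change (H y < 0).
  assert (Hcont : forall x, eps <= x < c -> forall e, 0 < e -> exists d, 0 < d /\
            forall t, D t -> Rabs (t - x) < d -> Rabs (H t - H x) < e).
  { intros x Hx. apply eps_delta. apply cont_H.
    apply cont_of_diff with (l := W1 x). apply Hder; auto.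
    apply cont_of_diff with (l := W2 x). apply Hder; auto. }
  assert (He : H eps < 0). { unfold H. nra. }
  destruct (Rlt_dec (H y) 0) as [ok|Hy0]; [exact ok|exfalso].
  apply Rnot_lt_le in Hy0.
  set (E := fun x => eps <= x <= y /\ forall t, eps <= t <= x -> H t < 0).
  assert (Eeps : E eps).
  { split. lra. intros t Ht. replace t with eps by lra. exact He. }
  assert (Eb : bound E). { exists y. intros x [Hx _]. lra. }
  destruct (completeness E Eb (ex_intro _ eps Eeps)) as [s [Hs1 Hs2]].
  assert (Hse : eps <= s) by (apply Hs1; exact Eeps).
  assert (Hsy : s <= y). { apply Hs2. intros x [Hx _]. lra. }
  assert (HA' : forall t, eps <= t < s -> H t < 0).
  { intros t Ht. destruct (classic (exists x, E x /\ t < x)) as [[x [[_ Ex] Htx]]|Hn].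
    - apply Ex. lra.
    - exfalso. assert (s <= t). { apply Hs2. intros x Ex.
        destruct (Rle_dec x t); auto. exfalso. apply Hn. exists x. split; auto; lra. }
      lra. }
  assert (Hs0 : H s = 0).
  { destruct (Rtotal_order (H s) 0) as [Hlt|[Heq|Hgt]]; auto; exfalso.
    - destruct (Hcont s ltac:(lra) (- H s / 2) ltac:(lra)) as [d [Hd Hd']].
      destruct (Req_dec s y) as [Esy|Nsy]. subst s; lra.
      set (x' := Rmin (s + d / 2) y).
      assert (X1 : x' <= s + d/2) by apply Rmin_l.
      assert (X2 : x' <= y) by apply Rmin_r.
      assert (X3 : s < x') by (unfold x'; apply Rmin_case; lra).
      assert (Ex' : E x').
      { split. lra.
        intros t Ht. destruct (Rlt_dec t s). apply HA'; lra.
        assert (Rabs (t - s) < d).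
        { apply Rabs_def1; lra. }
        specialize (Hd' t ltac:(unfold D; lra) H0). apply Rabs_def2 in Hd'. lra. }
      assert (x' <= s) by (apply Hs1; exact Ex').
      lra.
    - destruct (Req_dec s eps) as [Es|Ns]. subst s; lra.
      destruct (Hcont s ltac:(lra) (H s / 2) ltac:(lra)) as [d [Hd Hd']].
      set (t := Rmax (s - d / 2) eps).
      assert (Ht1 : eps <= t) by (unfold t; apply Rmax_r).
      assert (Ht2 : t < s) by (unfold t; apply Rmax_case; lra).
      assert (Ht3 : s - d/2 <= t) by (unfold t; apply Rmax_l).
      assert (Rabs (t - s) < d) by (apply Rabs_def1; lra).
      specialize (Hd' t ltac:(unfold D; lra) H0). apply Rabs_def2 in Hd'.
      specialize (HA' t ltac:(lra)). lra. }
  assert (Hse' : eps < s). { destruct (Req_dec s eps). subst s; lra. lra. }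
  assert (HsD : locally s D).
  { assert (Hp : 0 < Rmin (s - eps) (c - s)) by (apply Rmin_case; lra).
    exists (mkposreal _ Hp). intros z Hz. simpl in Hz.
    unfold ball in Hz; simpl in Hz; unfold AbsRing_ball, abs, minus, plus, opp in Hz; simpl in Hz.
    apply Rabs_def2 in Hz. unfold D.
    assert (Rmin (s - eps) (c - s) <= s - eps) by apply Rmin_l.
    assert (Rmin (s - eps) (c - s) <= c - s) by apply Rmin_r. lra. }
  destruct (Hder s ltac:(lra)) as [_ [HdW [HdW1 _]]].
  assert (Hd := der_H W W1 s (W1 s) (W2 s)
     (diff_interior _ _ _ _ HsD HdW) (diff_interior _ _ _ _ HsD HdW1)).
  set (l := W2 s * s + W1 s + 3 * W1 s) in Hd.
  assert (Hl : l < 0).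
  { destruct (Hode s ltac:(lra)) as [_ E2].
    assert (Ws : W1 s * s = - 3 * W s - 1) by (unfold H in Hs0; lra).
    rewrite Ws in E2.
    assert (Wn : W s < - / 3) by (apply HW; lra).
    assert (Rp : -2 * W s - Rf s > 0) by (apply HR; lra).
    assert (Key : l * s * W s = / 2 * (W s * s) ^ 2 * (-2 * W s - Rf s)).
    { unfold l. replace (W1 s * s) with (-3 * W s - 1) in E2 |- *.
      replace ((W2 s * s + W1 s + 3 * W1 s) * s * W s) with
        (W2 s * W s * s ^ 2 + 4 * W s * (W1 s * s)) by ring.
      rewrite E2, Ws. ring. }
    assert (P : 0 < / 2 * (W s * s) ^ 2 * (-2 * W s - Rf s)).
    { assert (0 < (W s * s) ^ 2).
      { assert (Hz : W s * s <> 0).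
        { apply Rmult_integral_contrapositive_currified; lra. }
        generalize (Rsqr_pos_lt _ Hz). unfold Rsqr. simpl. rewrite Rmult_1_r. auto. }
      apply Rmult_lt_0_compat; [|lra]. apply Rmult_lt_0_compat; lra. }
    rewrite <- Key in P.
    destruct (Rle_dec 0 l); [|lra].
    assert (0 <= l * s) by nra. nra. }
  apply is_derive_Reals in Hd.
  destruct (Hd (- l / 2) ltac:(lra)) as [d Hdd].
  set (h := - Rmin (d / 2) ((s - eps) / 2)).
  assert (h1 : Rmin (d / 2) ((s - eps) / 2) <= d / 2) by apply Rmin_l.
  assert (h2 : Rmin (d / 2) ((s - eps) / 2) <= (s - eps) / 2) by apply Rmin_r.
  assert (h3 : 0 < Rmin (d / 2) ((s - eps) / 2)) by (apply Rmin_case; generalize (cond_pos d); lra).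
  assert (hn : h <> 0) by (unfold h; lra).
  assert (ha : Rabs h < d) by (apply Rabs_def1; unfold h; lra).
  specialize (Hdd h hn ha). apply Rabs_def2 in Hdd.
  destruct Hdd as [Hdd _]. change ((H (s + h) - H s) / h - l < - l / 2) in Hdd. rewrite Hs0 in Hdd.
  assert (Hneg : H (s + h) < 0) by (apply HA'; unfold h; lra).
  set (q := (H (s + h) - 0) / h) in Hdd.
  assert (Hq : H (s + h) = q * h) by (unfold q; field; exact hn).
  assert (h < 0) by (unfold h; lra).
  nra.
Qed.
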